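(* Let $q\geq 3$ be an odd prime power and $m\geq 2$ an integer with $q^m\geq 25$. Then the third largest odd coset leader modulo $q^m-1$ is $$\delta_3=\begin{cases}(q-1)q^{m-1}-q^{\lceil\frac{2m-1}{3}\rceil}-q^{\lfloor\frac{m}{3}-1\rfloor}-1 & \text{if } 3\nmid(m+1),\\ (q-1)q^{m-1}-q^{\frac{2m-1}{3}}-q^{\frac{m+1}{3}}-1 & \text{if } 3\mid(m+1).\end{cases}$$ Moreover, $|C_{\delta_3}^{(q,q^m-1)}|=m$.
   Context: $C_i^{(q,N)}=\{i,iq,iq^2,\ldots\}\bmod N$ denotes the $q$-cyclotomic coset of $i$ modulo $N$; its smallest element is its coset leader. An odd coset leader modulo $N$ is a coset leader that is an odd integer. *)

(* Defs.v *)
From mathcomp Require Import all_boot.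
Set Implicit Arguments. Unset Strict Implicit. Unset Printing Implicit Defensive.

(* The sequence (i q^j mod N)_j takes values in
   [0, N) and each term determines the next, so all its values already
   occur among j = 0 .. N-1; hence this is the full coset. *)
Definition cyc_coset (q N i : nat) : seq nat :=
  undup [seq (i * q ^ j) %% N | j <- iota 0 N].

Definition coset_leader (q N i : nat) : bool :=
  (i < N) && all (fun x => i <= x) (cyc_coset q N i).

Definition odd_coset_leader (q N i : nat) : bool :=
  odd i && coset_leader q N i.

Definition third_largest_odd_coset_leader (q N d : nat) : Prop :=
  odd_coset_leader q N d /\
  count (fun i => odd_coset_leader q N i && (d < i)) (iota 0 N) = 2.

Definition prime_power (q : nat) : Prop :=
  exists p k, prime p /\ 0 < k /\ q = p ^ k.

(* Main.v *)
Require Import Defs.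
From mathcomp Require Import all_boot zify.
Set Implicit Arguments. Unset Strict Implicit. Unset Printing Implicit Defensive.

Lemma rotE q m x k : 0 < q -> x < q ^ m - 1 -> k <= m ->
  (x * q ^ k) %% (q ^ m - 1) = (x %% q ^ (m - k)) * q ^ k + x %/ q ^ (m - k).
Proof.
move=> q0 xN km.
have hm : q ^ m = q ^ (m - k) * q ^ k by rewrite -expnD subnK.
have Q1p : 0 < q ^ (m - k) by rewrite expn_gt0 q0.
have Q2p : 0 < q ^ k by rewrite expn_gt0 q0.
move: xN; rewrite hm.
move: Q1p Q2p; set Q1 := q ^ (m - k); set Q2 := q ^ k => Q1p Q2p xN.
have hx : x = x %/ Q1 * Q1 + x %% Q1 := divn_eq x Q1.
have hB : x %% Q1 < Q1 := ltn_pmod x Q1p.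
have hA : x %/ Q1 < Q2 by rewrite ltn_divLR //; lia.
move: hx hB hA; set A := x %/ Q1; set B := x %% Q1 => hx hB hA.
have hlt : A + B * Q2 < Q1 * Q2 - 1.
  have [eA|nA] := eqVneq A Q2.-1.
    have hB2 : B < Q1.-1 by rewrite hx eA in xN; nia.
    nia.
  have : A <= Q2 - 2 by lia.
  nia.
have -> : x * Q2 = A * (Q1 * Q2 - 1) + (A + B * Q2).
  rewrite {1}hx mulnBr muln1. nia.
rewrite modnMDl modn_small //; lia.
Qed.

Lemma expE q a b c : a + b = c -> q ^ a * q ^ b = q ^ c.
Proof. by move<-; rewrite expnD. Qed.

Lemma rot_split q m p H R : 1 < q -> p < m -> R < q ^ p.+1 ->
  H * q ^ p.+1 + R < q ^ m - 1 ->
  ((H * q ^ p.+1 + R) * q ^ (m - 1 - p)) %% (q ^ m - 1) = R * q ^ (m - 1 - p) + H.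
Proof.
move=> q1 pm hR hN. rewrite rotE //; try lia.
have -> : m - (m - 1 - p) = p.+1 by lia.
have qp : 0 < q ^ p.+1 by rewrite expn_gt0; lia.
by rewrite modnMDl modn_small // divnMDl // divn_small // addn0.
Qed.

Lemma modexp q m j : 1 < q -> 0 < m ->
  q ^ j %% (q ^ m - 1) = q ^ (j %% m) %% (q ^ m - 1).
Proof.
move=> q1 m0.
have -> : q ^ j = (q ^ m) ^ (j %/ m) * q ^ (j %% m).
  by rewrite -expnM -expnD mulnC -divn_eq.
rewrite -modnMml -modnXm.
have -> : q ^ m %% (q ^ m - 1) = 1 %% (q ^ m - 1).
  have qm : 0 < q ^ m by rewrite expn_gt0; lia.
  by rewrite -{1}(subnK qm) modnDl.
by rewrite modnXm exp1n modnMml mul1n.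
Qed.

Definition maxc q m c := forall k, k < m -> (c * q ^ k) %% (q ^ m - 1) <= c.

Lemma leaderP q m i : 1 < q -> 0 < m ->
  coset_leader q (q ^ m - 1) i <->
  i < q ^ m - 1 /\ forall k, k < m -> i <= (i * q ^ k) %% (q ^ m - 1).
Proof.
move=> q1 m0; have mN : m <= q ^ m - 1.
  have := ltn_expl m q1; lia.
rewrite /coset_leader /cyc_coset all_undup all_map; split.
  case/andP => iN /allP H; split => // k km; apply: (H k); rewrite mem_iota; lia.
case=> iN H; apply/andP; split => //; apply/allP => j _ /=.
rewrite -modnMmr modexp // modnMmr; apply: H; exact: ltn_pmod.
Qed.


Lemma compl_rot q m c k : 1 < q -> 0 < c -> c < q ^ m - 1 -> k <= m ->
  ((q ^ m - 1 - c) * q ^ k) %% (q ^ m - 1) = q ^ m - 1 - (c * q ^ k) %% (q ^ m - 1).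
Proof.
move=> q1 c0 cN km.
rewrite !rotE //; try lia.
have hm : q ^ m = q ^ (m - k) * q ^ k by rewrite -expnD subnK.
have Q1p : 0 < q ^ (m - k) by rewrite expn_gt0; lia.
have Q2p : 0 < q ^ k by rewrite expn_gt0; lia.
rewrite hm; move: cN; rewrite hm.
move: Q1p Q2p; set Q1 := q ^ (m - k); set Q2 := q ^ k => Q1p Q2p cN.
have hx : c = c %/ Q1 * Q1 + c %% Q1 := divn_eq c Q1.
have hB : c %% Q1 < Q1 := ltn_pmod c Q1p.
have hA : c %/ Q1 < Q2 by rewrite ltn_divLR //; lia.
move: hx hB hA; set A := c %/ Q1; set B := c %% Q1 => hx hB hA.
have [A' eA] : exists A', Q2 = A + A'.+1 by exists (Q2 - A.+1); lia.
have [B' eB] : exists B', Q1 = B + B'.+1 by exists (Q1 - B.+1); lia.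
have e1 : Q1 * Q2 - 1 - c = A' * Q1 + B'.
  rewrite hx eA eB. lia.
rewrite e1.
have hB' : B' < Q1 by lia.
rewrite modnMDl modn_small // divnMDl // divn_small // addn0.
clearbody Q1 Q2 A B. subst Q1 Q2. lia.
Qed.

Lemma leader_compl q m c : 1 < q -> 0 < m -> 0 < c -> c < q ^ m - 1 ->
  coset_leader q (q ^ m - 1) (q ^ m - 1 - c) <-> maxc q m c.
Proof.
move=> q1 m0 c0 cN; rewrite leaderP //.
have hlt k : (c * q ^ k) %% (q ^ m - 1) < q ^ m - 1 by apply: ltn_pmod; lia.
split.
  case=> _ H k km; have := H k km; rewrite compl_rot //; last lia.
  have := hlt k; lia.
move=> H; split; first lia.
move=> k km; have := H k km; rewrite compl_rot //; last lia.
have := hlt k; lia.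
Qed.

Lemma rot_gap q m p H R : 1 < q -> p < m -> R < q ^ p ->
  H * q ^ p.+1 + R < q ^ m - 1 ->
  ((H * q ^ p.+1 + R) * q ^ (m - 1 - p)) %% (q ^ m - 1) < q ^ (m - 1).
Proof.
move=> q1 pm hR hN; rewrite rot_split //; last first.
  rewrite expnS; have : 0 < q ^ p by rewrite expn_gt0; lia.
  by move=> ?; apply: (leq_trans hR); rewrite leq_pmull //; lia.
have e1 : q ^ p * q ^ (m - 1 - p) = q ^ (m - 1) by apply: expE; lia.
have e2 : q * q ^ p * q ^ (m - 1 - p) = q ^ m.
  rewrite -mulnA e1 -expnS; congr (_ ^ _); lia.
have X0 : 0 < q ^ (m - 1 - p) by rewrite expn_gt0; lia.
have Y0 : 0 < q ^ p by rewrite expn_gt0; lia.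
move: hN; rewrite expnS -e1 -e2.
move: X0 Y0 hR; set X := q ^ (m - 1 - p); set Y := q ^ p => X0 Y0 hR hN.
clearbody X Y.
have hH : H < X.
  have h1 : H * (q * Y) < X * (q * Y).
    apply: (leq_trans _ (leq_subr 1 _)). lia.
  by move: h1; rewrite ltn_pmul2r // muln_gt0; lia.
have h2 : R * X <= (Y - 1) * X by rewrite leq_mul2r; lia.
rewrite mulnBl mul1n in h2.
have : Y * X >= X by rewrite leq_pmull.
lia.
Qed.

Lemma maxc_split q m c p H R : maxc q m c -> 1 < q -> p < m -> R < q ^ p.+1 ->
  c = H * q ^ p.+1 + R -> c < q ^ m - 1 -> R * q ^ (m - 1 - p) + H <= c.
Proof.
move=> mc q1 pm hR hc cN; rewrite -rot_split //; last by rewrite -hc.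
rewrite -hc; apply: mc; lia.
Qed.

Lemma expo_le q u v X : 1 < q -> q ^ u <= X -> X < q ^ v.+1 -> u <= v.
Proof. move=> q1 h1 h2; have : q ^ u < q ^ v.+1 by lia. by rewrite ltn_exp2l. Qed.

Lemma two_pow q u v : 1 < q -> v < u -> 2 * q ^ v <= q ^ u.
Proof.
move=> q1 vu; apply: (@leq_trans (q ^ v.+1)); last by rewrite leq_exp2l.
by rewrite expnS leq_mul2r; lia.
Qed.

Lemma lex2 q u v u' v' : 1 < q -> v < u -> v' < u' ->
  q ^ u + q ^ v <= q ^ u' + q ^ v' -> u < u' \/ (u = u' /\ v <= v').
Proof.
move=> q1 vu vu' h.
case: (ltngtP u u') => [//|h2|h2]; [left=> // | exfalso | right; split => //].
  have := two_pow q1 vu'; have := two_pow q1 h2.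
  have : q ^ v' < q ^ u' by rewrite ltn_exp2l.
  have : 0 < q ^ v by rewrite expn_gt0; lia.
  lia.
by move: h; rewrite h2 leq_add2l leq_exp2l.
Qed.

Lemma lex2_lt q u v u' v' : 1 < q -> v < u -> v' < u' ->
  (u < u' \/ (u = u' /\ v < v')) -> q ^ u + q ^ v < q ^ u' + q ^ v'.
Proof.
move=> q1 vu vu' [h|[-> h]]; last by rewrite ltn_add2l ltn_exp2l.
have := two_pow q1 vu; have := two_pow q1 h.
have : q ^ v < q ^ u by rewrite ltn_exp2l.
lia.
Qed.

Lemma lt2_of q m c p R H : 1 < q -> p < m -> R * q ^ (m - 1 - p) + H <= c ->
  c < 2 * q ^ (m - 1) -> R < 2 * q ^ p.
Proof.
move=> q1 pm h1 h2; rewrite ltnNge; apply/negP => h.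
have e : q ^ p * q ^ (m - 1 - p) = q ^ (m - 1) by apply: expE; lia.
have : 2 * q ^ p * q ^ (m - 1 - p) <= R * q ^ (m - 1 - p) by rewrite leq_mul2r h orbT.
rewrite -mulnA e; lia.
Qed.

Lemma odd_pow q n : odd q -> odd (q ^ n).
Proof. by move=> oq; rewrite oddX oq orbT. Qed.

Ltac clean := repeat match goal with H : context [_ ^ _] |- _ => clear H end.

Definition L1 m t t' := (m - 1 - t + t' < t) \/ (m - 1 - t + t' = t /\ m - 2 - t <= t').
Definition L2 m t t' := (m - 2 - t' < t) \/ (m - 2 - t' = t /\ t - t' - 1 <= t').

Lemma top_pos q R : 1 < q -> 0 < R -> exists t S, R = q ^ t + S /\ S < q ^ t.+1 - q ^ t.
Proof.
move=> q1 Rp; exists (trunc_log q R), (R - q ^ trunc_log q R).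
have h1 := trunc_logP q1 Rp; have h2 := trunc_log_ltn R q1; lia.
Qed.

Lemma peel q m c : odd q -> 3 <= q -> 3 <= m -> maxc q m c -> odd c ->
  q ^ (m - 1) <= c -> c < 2 * q ^ (m - 1) ->
  c = q ^ (m - 1) \/ exists t t' R2, [/\ t' < t < m - 1, R2 < q ^ t',
     c = q ^ (m - 1) + q ^ t + q ^ t' + R2 &
     (R2 = 0 /\ L1 m t t' /\ L2 m t t') \/
     (exists t'', [/\ 1 <= t'', t'' < t', m - 1 - t + t' <= t,
                     m - 1 - t' + t'' <= t & m - 2 - t'' <= t])].
Proof.
move=> oq q3 m3 mc oc c1 c2.
have q1 : 1 < q by lia.
have P0 : 0 < q ^ (m - 1) by rewrite expn_gt0; lia.
have hm : q ^ m = q * q ^ (m - 1) by rewrite -expnS; congr (_ ^ _); lia.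
have cN : c < q ^ m - 1.
  have : 3 * q ^ (m - 1) <= q * q ^ (m - 1) by rewrite leq_mul2r; lia.
  move: c2 hm P0; clean; lia.
clear hm.
move: P0 c1 c2 cN; set P := q ^ (m - 1) => P0 c1 c2 cN.
have [R hc] : exists R, c = P + R by exists (c - P); lia.
subst c.
have [R0|Rp] := posnP R; first by left; lia.
right.
have [t [R1 [hR hR1]]] := top_pos q1 Rp.
have tm : t < m - 1.
  have : q ^ t < q ^ (m - 1) by move: c2 hR; clean; lia.
  by rewrite ltn_exp2l.
have e_t : P = q ^ (m - 2 - t) * q ^ t.+1 by rewrite /P; symmetry; apply: expE; clean; lia.
have I1 := @maxc_split q m (P + R) t (q ^ (m - 2 - t)) R mc q1 ltac:(clean; lia)
   ltac:(move: hR hR1; clean; lia) ltac:(move: e_t; clean; lia) cN.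
have R2t := @lt2_of q m _ t R _ q1 ltac:(clean; lia) I1 c2.
subst R.
have oR1 : odd R1.
  by move: oc; rewrite !oddD !(odd_pow _ oq); case: (odd R1).
have R1p : 0 < R1 by case: (R1) oR1.
have [t' [R2 [hR1' hR2]]] := top_pos q1 R1p.
have t't : t' < t.
  have : q ^ t' < q ^ t by move: hR1' R2t; clean; lia.
  by rewrite ltn_exp2l.
have e_t'a : P = q ^ (m - 2 - t') * q ^ t'.+1 by rewrite /P; symmetry; apply: expE; clean; lia.
have e_t'b : q ^ t = q ^ (t - t' - 1) * q ^ t'.+1 by symmetry; apply: expE; clean; lia.
have I2 := @maxc_split q m (P + (q ^ t + R1)) t' (q ^ (m - 2 - t') + q ^ (t - t' - 1)) R1 mc q1
   ltac:(clean; lia) ltac:(move: hR1' hR2; clean; lia)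
   ltac:(rewrite mulnDl -e_t'a -e_t'b; clean; lia) cN.
have R1t := @lt2_of q m _ t' R1 _ q1 ltac:(clean; lia) I2 c2.
subst R1.
have eR2 : ~~ odd R2.
  by move: oR1; rewrite oddD !(odd_pow _ oq); case: (odd R2).
exists t, t', R2; split; [clean; lia | move: R1t; clean; lia | clean; lia | ].
have eA : q ^ t' * q ^ (m - 1 - t) = q ^ (m - 1 - t + t') by apply: expE; clean; lia.
have eB : q ^ t * q ^ (m - 1 - t) = P by apply: expE; clean; lia.
have eC : q ^ t' * q ^ (m - 1 - t') = P by apply: expE; clean; lia.
have cup : q ^ t + (q ^ t' + R2) < q ^ t.+1.
  have := two_pow q1 (ltnSn t); move: R2t; clean; lia.
have [R20|R2p] := posnP R2.
  subst R2; left; split => //.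
  rewrite !addn0 mulnDl eA eB in I1.
  rewrite !addn0 eC in I2.
  split.
    apply: (@lex2 q _ _ t t' q1 _ t't); first by clean; lia.
    by move: I1; clean; lia.
  apply: (@lex2 q _ _ t t' q1 _ t't); first by clean; lia.
  by move: I2; clean; lia.
right.
have [t'' [R3 [hR2' hR3]]] := top_pos q1 R2p.
have t''t : t'' < t'.
  have : q ^ t'' < q ^ t' by move: hR2' R1t; clean; lia.
  by rewrite ltn_exp2l.
subst R2.
have eD : q ^ t'' * q ^ (m - 1 - t') = q ^ (m - 1 - t' + t'') by apply: expE; clean; lia.
have eE : q ^ t'' * q ^ (m - 1 - t'') = P by apply: expE; clean; lia.
have e3a : P = q ^ (m - 2 - t'') * q ^ t''.+1 by rewrite /P; symmetry; apply: expE; clean; lia.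
have e3b : q ^ t = q ^ (t - t'' - 1) * q ^ t''.+1 by symmetry; apply: expE; clean; lia.
have e3c : q ^ t' = q ^ (t' - t'' - 1) * q ^ t''.+1 by symmetry; apply: expE; clean; lia.
have I3 := @maxc_split q m _ t'' (q ^ (m - 2 - t'') + q ^ (t - t'' - 1) + q ^ (t' - t'' - 1))
   (q ^ t'' + R3) mc q1
   ltac:(clean; lia) ltac:(move: hR3; clean; lia)
   ltac:(rewrite !mulnDl -e3a -e3b -e3c; clean; lia) cN.
have R3t := @lt2_of q m _ t'' _ _ q1 ltac:(clean; lia) I3 c2.
have oR3 : odd R3.
  by move: eR2; rewrite oddD !(odd_pow _ oq); case: (odd R3).
exists t''; split.
- have : t'' != 0.
    apply/eqP => h0; move: R3t oR3; rewrite h0 expn0.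
    have [->|R3p] := posnP R3; first by [].
    lia.
  lia.
- done.
- apply: (@expo_le q _ _ (q ^ t + (q ^ t' + (q ^ t'' + R3))) q1 _ cup).
  rewrite !mulnDl eA eB in I1; move: I1; clean; lia.
- apply: (@expo_le q _ _ (q ^ t + (q ^ t' + (q ^ t'' + R3))) q1 _ cup).
  rewrite !mulnDl eC eD in I2; move: I2; clean; lia.
- apply: (@expo_le q _ _ (q ^ t + (q ^ t' + (q ^ t'' + R3))) q1 _ cup).
  rewrite !mulnDl eE in I3; move: I3; clean; lia.
Qed.

Lemma lex2_le q u v u' v' : 1 < q -> v < u -> v' < u' ->
  (u < u' \/ (u = u' /\ v <= v')) -> q ^ u + q ^ v <= q ^ u' + q ^ v'.
Proof.
move=> q1 vu vu' [h|[-> h]]; last by rewrite leq_add2l leq_exp2l.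
apply: ltnW; apply: lex2_lt => //; by left.
Qed.

Lemma rot3 q m t t' k : 2 < q -> t' < t -> t < m - 1 -> 0 < k -> k < m ->
  let c := q ^ (m - 1) + q ^ t + q ^ t' in
  (c * q ^ k) %% (q ^ m - 1) < q ^ (m - 1) \/
  (c * q ^ k) %% (q ^ m - 1) = q ^ (m - 1) + q ^ (m - 1 - t + t') + q ^ (m - 2 - t) \/
  (c * q ^ k) %% (q ^ m - 1) = q ^ (m - 1) + q ^ (m - 2 - t') + q ^ (t - t' - 1).
Proof.
move=> q3 t't tm k0 km c.
have q1 : 1 < q by lia.
have P0 : 0 < q ^ (m - 1) by rewrite expn_gt0; lia.
have hm : q ^ m = q * q ^ (m - 1) by rewrite -expnS; congr (_ ^ _); lia.
have cN : c < q ^ m - 1.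
  have h1 := two_pow q1 t't.
  have h2 := two_pow q1 tm.
  have h3 : 3 * q ^ (m - 1) <= q * q ^ (m - 1) by rewrite leq_mul2r; lia.
  rewrite /c hm; lia.
have [p hk] : exists p, k = m - 1 - p /\ p < m - 1 by exists (m - 1 - k); lia.
case: hk => -> pm; clear k0 km.
have b1 := two_pow q1 t't.
case: (ltngtP t p) => [tp|pt|<-].
- left. have eP : q ^ (m - 1) = q ^ (m - 2 - p) * q ^ p.+1 by symmetry; apply: expE; clean; lia.
  have hR : q ^ t + q ^ t' < q ^ p.
    have := two_pow q1 tp; lia.
  have hc : c = q ^ (m - 2 - p) * q ^ p.+1 + (q ^ t + q ^ t') by rewrite /c -eP addnA.
  by rewrite hc; apply: rot_gap => //; [lia | rewrite -hc].
- case: (ltngtP t' p) => [t'p|pt'|<-].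
  + left.
    have eP : q ^ (m - 1) = q ^ (m - 2 - p) * q ^ p.+1 by symmetry; apply: expE; clean; lia.
    have eT : q ^ t = q ^ (t - p - 1) * q ^ p.+1 by symmetry; apply: expE; clean; lia.
    have hR : q ^ t' < q ^ p by rewrite ltn_exp2l.
    have hc : c = (q ^ (m - 2 - p) + q ^ (t - p - 1)) * q ^ p.+1 + q ^ t'.
      by rewrite /c mulnDl -eP -eT.
    by rewrite hc; apply: rot_gap => //; [lia | rewrite -hc].
  + left.
    have eP : q ^ (m - 1) = q ^ (m - 2 - p) * q ^ p.+1 by symmetry; apply: expE; clean; lia.
    have eT : q ^ t = q ^ (t - p - 1) * q ^ p.+1 by symmetry; apply: expE; clean; lia.
    have eT' : q ^ t' = q ^ (t' - p - 1) * q ^ p.+1 by symmetry; apply: expE; clean; lia.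
    have hc : c = (q ^ (m - 2 - p) + q ^ (t - p - 1) + q ^ (t' - p - 1)) * q ^ p.+1 + 0.
      by rewrite /c !mulnDl -eP -eT -eT' addn0.
    by rewrite hc; apply: rot_gap => //; [lia | rewrite expn_gt0; lia | rewrite -hc].
  + right; right.
    have eP : q ^ (m - 1) = q ^ (m - 2 - t') * q ^ t'.+1 by symmetry; apply: expE; clean; lia.
    have eT : q ^ t = q ^ (t - t' - 1) * q ^ t'.+1 by symmetry; apply: expE; clean; lia.
    have eC : q ^ t' * q ^ (m - 1 - t') = q ^ (m - 1) by apply: expE; clean; lia.
    have hc : c = (q ^ (m - 2 - t') + q ^ (t - t' - 1)) * q ^ t'.+1 + q ^ t'.
      by rewrite /c mulnDl -eP -eT.
    rewrite hc rot_split //; [ | lia | by rewrite ltn_exp2l | by rewrite -hc].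
    by rewrite eC addnA.
- right; left.
  have eP : q ^ (m - 1) = q ^ (m - 2 - t) * q ^ t.+1 by symmetry; apply: expE; clean; lia.
  have eB : q ^ t * q ^ (m - 1 - t) = q ^ (m - 1) by apply: expE; clean; lia.
  have eA : q ^ t' * q ^ (m - 1 - t) = q ^ (m - 1 - t + t') by apply: expE; clean; lia.
  have hc : c = q ^ (m - 2 - t) * q ^ t.+1 + (q ^ t + q ^ t') by rewrite /c -eP addnA.
  rewrite hc rot_split //; [ | lia | | by rewrite -hc]; last first.
    have := two_pow q1 (ltnSn t); lia.
  rewrite mulnDl eB eA; lia.
Qed.

Definition L1s m t t' := (m - 1 - t + t' < t) \/ (m - 1 - t + t' = t /\ m - 2 - t < t').
Definition L2s m t t' := (m - 2 - t' < t) \/ (m - 2 - t' = t /\ t - t' - 1 < t').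

Lemma maxc_of_le q m c : c < q ^ m - 1 ->
  (forall k, 0 < k -> k < m -> (c * q ^ k) %% (q ^ m - 1) <= c) -> maxc q m c.
Proof.
move=> cN H k km; case: k km => [|k] km; last by apply: H.
by rewrite expn0 muln1 modn_small.
Qed.

Lemma maxc3 q m t t' : 2 < q -> t' < t -> t < m - 1 -> L1 m t t' -> L2 m t t' ->
  maxc q m (q ^ (m - 1) + q ^ t + q ^ t').
Proof.
move=> q3 t't tm h1 h2; have q1 : 1 < q by lia.
have b1 := two_pow q1 t't.
have b2 := two_pow q1 tm.
have hm : q ^ m = q * q ^ (m - 1) by rewrite -expnS; congr (_ ^ _); lia.
have h3 : 3 * q ^ (m - 1) <= q * q ^ (m - 1) by rewrite leq_mul2r; lia.
apply: maxc_of_le; first by rewrite hm; lia.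
move=> k k0 km.
have l1 : q ^ (m - 1 - t + t') + q ^ (m - 2 - t) <= q ^ t + q ^ t'.
  apply: lex2_le => //; clean; lia.
have l2 : q ^ (m - 2 - t') + q ^ (t - t' - 1) <= q ^ t + q ^ t'.
  apply: lex2_le => //; clean; lia.
have [h|[h|h]] := rot3 q3 t't tm k0 km; [lia | rewrite h; lia | rewrite h; lia].
Qed.

Lemma strict3 q m t t' : 2 < q -> t' < t -> t < m - 1 -> L1s m t t' -> L2s m t t' ->
  forall k, 0 < k -> k < m ->
  ((q ^ (m - 1) + q ^ t + q ^ t') * q ^ k) %% (q ^ m - 1) < q ^ (m - 1) + q ^ t + q ^ t'.
Proof.
move=> q3 t't tm h1 h2 k k0 km; have q1 : 1 < q by lia.
have l1 : q ^ (m - 1 - t + t') + q ^ (m - 2 - t) < q ^ t + q ^ t'.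
  apply: lex2_lt => //; clean; lia.
have l2 : q ^ (m - 2 - t') + q ^ (t - t' - 1) < q ^ t + q ^ t'.
  apply: lex2_lt => //; clean; lia.
have [h|[h|h]] := rot3 q3 t't tm k0 km; [lia | rewrite h; lia | rewrite h; lia].
Qed.

Lemma shapeX q m X k : 1 < q -> 1 < m -> 0 < X -> X < q -> 0 < k -> k < m ->
  ((X * q ^ (m - 1)) * q ^ k) %% (q ^ m - 1) < q ^ (m - 1).
Proof.
move=> q1 m1 X0 Xq k0 km.
have [p [-> pm]] : exists p, k = m - 1 - p /\ p < m - 1 by exists (m - 1 - k); lia.
have eP : q ^ (m - 1) = q ^ (m - 2 - p) * q ^ p.+1 by symmetry; apply: expE; clean; lia.
have hm : q ^ m = q * q ^ (m - 1) by rewrite -expnS; congr (_ ^ _); lia.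
have P0 : 0 < q ^ (m - 1) by rewrite expn_gt0; lia.
have cN : X * q ^ (m - 1) < q ^ m - 1.
  have : X * q ^ (m - 1) <= (q - 1) * q ^ (m - 1) by rewrite leq_mul2r; lia.
  have : q ^ 1 <= q ^ (m - 1) by rewrite leq_exp2l //; lia.
  rewrite mulnBl mul1n hm expn1; lia.
have hc : X * q ^ (m - 1) = (X * q ^ (m - 2 - p)) * q ^ p.+1 + 0 by rewrite addn0 -mulnA -eP.
rewrite hc; apply: rot_gap; [done | lia | rewrite expn_gt0; lia | by rewrite -hc].
Qed.

Lemma shape21 q m k : 2 < q -> 1 < m -> 0 < k -> k < m ->
  ((2 * q ^ (m - 1) + 1) * q ^ k) %% (q ^ m - 1) < 2 * q ^ (m - 1) + 1.
Proof.
move=> q3 m1 k0 km; have q1 : 1 < q by lia.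
have [p [-> pm]] : exists p, k = m - 1 - p /\ p < m - 1 by exists (m - 1 - k); lia.
have eP : q ^ (m - 1) = q ^ (m - 2 - p) * q ^ p.+1 by symmetry; apply: expE; clean; lia.
have hm : q ^ m = q * q ^ (m - 1) by rewrite -expnS; congr (_ ^ _); lia.
have P0 : 0 < q ^ (m - 1) by rewrite expn_gt0; lia.
have cN : 2 * q ^ (m - 1) + 1 < q ^ m - 1.
  have : 3 * q ^ (m - 1) <= q * q ^ (m - 1) by rewrite leq_mul2r; lia.
  rewrite hm; have : 1 <= q ^ (m - 1) by []. 
  have : q ^ 1 <= q ^ (m - 1) by rewrite leq_exp2l //; lia.
  rewrite expn1; lia.
have hc : 2 * q ^ (m - 1) + 1 = (2 * q ^ (m - 2 - p)) * q ^ p.+1 + 1 by rewrite -mulnA -eP.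
case: p pm eP hc => [|p] pm eP hc.
  rewrite hc rot_split //. all: try lia. all: try by rewrite -hc. all: try by rewrite expn1.
  rewrite !subn0 mul1n expn1.
  have e : q ^ (m - 1) = q * q ^ (m - 2) by rewrite -expnS; congr (_ ^ _); lia.
  have : 2 * q ^ (m - 2) < q ^ (m - 1) by rewrite e ltn_mul2r; lia.
  rewrite e; lia.
apply: (@leq_trans (q ^ (m - 1))); last lia.
rewrite hc; apply: rot_gap; [done | lia | | by rewrite -hc].
rewrite (_ : 1 = q ^ 0) // ltn_exp2l //.
Qed.

Lemma size_coset q m d : 1 < q -> 0 < m -> d < q ^ m - 1 ->
  (forall k, 0 < k -> k < m -> (d * q ^ k) %% (q ^ m - 1) != d) ->
  size (cyc_coset q (q ^ m - 1) d) = m.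
Proof.
move=> q1 m0 dN H.
set N := q ^ m - 1 in dN H *.
have mN : m <= N by have := ltn_expl m q1; rewrite /N; lia.
pose g x := (d * q ^ x) %% N.
have gmod x : g x = g (x %% m).
  by rewrite /g -modnMmr /N modexp // modnMmr.
have gadd x y : (g x * q ^ y) %% N = g (x + y).
  by rewrite /g modnMml -mulnA -expnD.
have g0 : g 0 = d by rewrite /g expn0 muln1 modn_small.
have ginj : {in iota 0 m &, injective g}.
  have key i j : i < j -> j < m -> g i = g j -> False.
    move=> ij jm e.
    have : g (i + (m - i)) = g (j + (m - i)) by rewrite -!gadd e.
    rewrite (gmod (i + _)) (gmod (j + _)).
    have -> : (i + (m - i)) %% m = 0 by rewrite subnKC ?modnn //; lia.
    have -> : (j + (m - i)) %% m = j - i.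
      have -> : j + (m - i) = 1 * m + (j - i) by lia.
      by rewrite modnMDl modn_small //; lia.
    rewrite g0 => e2; have := H (j - i) ltac:(lia) ltac:(lia).
    by rewrite -/(g _) -e2 eqxx.
  move=> i j; rewrite !mem_iota => /andP [_ im] /andP [_ jm] e.
  case: (ltngtP i j) => // h; exfalso.
    exact: (key i j).
  exact: (key j i).
have eqm : undup [seq g j | j <- iota 0 N] =i [seq g j | j <- iota 0 m].
  move=> x; rewrite mem_undup; apply/mapP/mapP => [[j]|[j]].
    rewrite !mem_iota => /andP [_ jN] ->; exists (j %% m); last exact: gmod.
    by rewrite mem_iota /= ltn_pmod.
  rewrite !mem_iota => /andP [_ jm] ->; exists j => //.
  by rewrite mem_iota /=; lia.
rewrite /cyc_coset -/N.
have -> : [seq (d * q ^ j) %% N | j <- iota 0 N] = [seq g j | j <- iota 0 N] by [].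
rewrite (perm_size (uniq_perm (undup_uniq _) _ eqm)) ?size_map ?size_iota //.
by rewrite map_inj_in_uniq ?iota_uniq.
Qed.

Definition ABspec m a b :=
  (~~ (3 %| m.+1) /\ a = (2 * m + 1) %/ 3 /\ b = m %/ 3 - 1) \/
  (3 %| m.+1 /\ a = (2 * m - 1) %/ 3 /\ b = (m + 1) %/ 3).

Lemma mod3_cases m : 3 <= m -> exists n, 
  (m = 3 * n /\ 1 <= n) \/ (m = 3 * n + 1 /\ 1 <= n) \/ m = 3 * n + 2.
Proof. move=> m3; exists (m %/ 3); lia. Qed.

Lemma AB_vals m a b : 3 <= m -> ABspec m a b -> exists n,
  (m = 3 * n /\ 1 <= n /\ a = 2 * n /\ b = n - 1) \/
  (m = 3 * n + 1 /\ 1 <= n /\ a = 2 * n + 1 /\ b = n - 1) \/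
  (m = 3 * n + 2 /\ a = 2 * n + 1 /\ b = n + 1).
Proof.
move=> m3 h; have [n [[hm hn]|[[hm hn]|hm]]] := mod3_cases m3; exists n; subst m.
- by left; case: h; lia.
- by right; left; case: h; lia.
- by right; right; case: h; lia.
Qed.

Lemma arith3 m t t' a b : 3 <= m -> ABspec m a b -> t' < t -> t < m - 1 ->
  L1 m t t' -> L2 m t t' -> (m <= 4 \/ t < a \/ (t = a /\ t' < b)) ->
  t = m - 2 - (m - 3) %/ 3 /\ t' = (m - 1) %/ 3.
Proof.
move=> m3 h; have [n [[-> [hn [-> ->]]]|[[-> [hn [-> ->]]]|[-> [-> ->]]]]] := AB_vals m3 h;
rewrite /L1 /L2.
- have -> : (3 * n - 3) %/ 3 = n - 1 by lia.
  have -> : (3 * n - 1) %/ 3 = n - 1 by lia.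
  lia.
- have -> : (3 * n + 1 - 3) %/ 3 = n - 1 by lia.
  have -> : (3 * n + 1 - 1) %/ 3 = n by lia.
  lia.
- have -> : (3 * n + 2 - 3) %/ 3 = n - 1 by lia.
  have -> : (3 * n + 2 - 1) %/ 3 = n by lia.
  lia.
Qed.

Lemma arith4 m t t' t'' a b : 3 <= m -> ABspec m a b -> t' < t -> t < m - 1 ->
  1 <= t'' -> t'' < t' -> m - 1 - t + t' <= t -> m - 1 - t' + t'' <= t -> m - 2 - t'' <= t ->
  (m <= 4 \/ t < a \/ (t = a /\ t' < b)) -> False.
Proof.
move=> m3 h; have [n [[-> [hn [-> ->]]]|[[-> [hn [-> ->]]]|[-> [-> ->]]]]] := AB_vals m3 h; lia.
Qed.

Lemma top_ge q m c : 1 < q -> 1 < m -> 0 < c -> c < q ^ m - 1 -> maxc q m c ->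
  q ^ (m - 1) <= c.
Proof.
move=> q1 m1 c0 cN mc; rewrite leqNgt; apply/negP => cP.
have [t [S [hc hS]]] := top_pos q1 c0.
have tm : t < m - 1.
  have : q ^ t < q ^ (m - 1) by move: cP hc; clean; lia.
  by rewrite ltn_exp2l.
have I := @maxc_split q m c t 0 c mc q1 ltac:(lia) ltac:(move: hc hS; clean; lia)
  ltac:(by rewrite mul0n) cN.
have e : q ^ t * q ^ (m - 1 - t) = q ^ (m - 1) by apply: expE; clean; lia.
have : q ^ t * q ^ (m - 1 - t) <= c * q ^ (m - 1 - t) by rewrite leq_mul2r; lia.
lia.
Qed.

Lemma m2_case q c : odd q -> 2 < q -> maxc q 2 c -> 0 < c -> c < q ^ 2 - 1 -> odd c ->
  c < 3 * q -> c = q \/ c = 2 * q + 1.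
Proof.
move=> oq q3 mc c0 cN oc c3; have q1 : 1 < q by lia.
have := top_ge q1 (ltnSn 1) c0 cN mc; rewrite expn1 => cq.
have q0 : 0 < q by lia.
have hc := divn_eq c q.
have hR := ltn_pmod c q0.
have H3 : c %/ q < 3 by rewrite ltn_divLR.
have H1 : 0 < c %/ q by rewrite divn_gt0.
have I := @maxc_split q 2 c 0 (c %/ q) (c %% q) mc q1 ltac:(lia)
  ltac:(by rewrite expn1) ltac:(by rewrite expn1) cN.
rewrite subn0 expn1 in I.
move: oc hc hR I H3 H1; set H := c %/ q; set R := c %% q => oc hc hR I H3 H1.
clearbody H R.
have RH : R <= H.
  rewrite leqNgt; apply/negP => RH.
  have [D eD] : exists D, R = H + D.+1 by exists (R - H.+1); lia.
  rewrite eD mulnDl mulSn in I.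
  have : D <= D * q by rewrite leq_pmulr.
  lia.
have oc' : odd c = odd H (+) odd R by rewrite hc oddD oddM oq andbT.
have [eH|eH] : H = 1 \/ H = 2 by lia.
  left; rewrite eH in oc' RH hc.
  have [R0|R1] : R = 0 \/ R = 1 by lia.
    lia.
  by move: oc; rewrite oc' R1.
right; rewrite eH in oc' RH hc.
have [R0|[R1|R2]] : R = 0 \/ R = 1 \/ R = 2 by lia.
- by move: oc; rewrite oc' R0.
- lia.
- by move: oc; rewrite oc' R2.
Qed.

Lemma constr q t t' R2 a b : 1 < q -> b < a -> t' < t -> R2 < q ^ t' ->
  q ^ t + q ^ t' + R2 < q ^ a + q ^ b -> t < a \/ (t = a /\ t' < b).
Proof.
move=> q1 ba t't hR h.
case: (ltngtP t a) => [|ha|eta]; [by left | exfalso | right; split => //].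
  have := two_pow q1 ha; have : q ^ b < q ^ a by rewrite ltn_exp2l.
  lia.
have : q ^ t' < q ^ b by subst; lia.
by rewrite ltn_exp2l.
Qed.

Lemma AB_facts m a b : 2 <= m -> ABspec m a b ->
  (m = 2 /\ a = 1 /\ b = 1) \/ ((3 <= m /\ m <= 4) /\ a = m - 1 /\ b = 0) \/
  (5 <= m /\ b < a /\ a < m - 1).
Proof.
move=> m2 h; case: (leqP m 4) => m4.
  have hm : m = 2 \/ m = 3 \/ m = 4 by lia.
  by case: hm h {m2 m4} => [->|[->|->]] [[h1 [-> ->]]|[h1 [-> ->]]]; move: h1; rewrite //=; lia.
have m3 : 3 <= m by lia.
have [n hn] := AB_vals m3 h; lia.
Qed.

Definition c2 q m := if m == 2 then 2 * q + 1
  else q ^ (m - 1) + q ^ (m - 2 - (m - 3) %/ 3) + q ^ ((m - 1) %/ 3).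

Lemma charac_fwd q m a b c : odd q -> 2 < q -> 2 <= m -> ABspec m a b ->
  0 < c -> c < q ^ m - 1 -> maxc q m c -> odd c -> c < q ^ (m - 1) + q ^ a + q ^ b ->
  c = q ^ (m - 1) \/ c = c2 q m.
Proof.
move=> oq q3 m2 hab c0 cN mc oc ce; have q1 : 1 < q by lia.
have hP := top_ge q1 m2 c0 cN mc.
have [[em [ea eb]]|hm3] : (m = 2 /\ a = 1 /\ b = 1) \/ (3 <= m /\ (((3 <= m /\ m <= 4) /\ a = m - 1 /\ b = 0) \/ (5 <= m /\ b < a /\ a < m - 1))).
  by have := AB_facts m2 hab; lia.
  subst m a b; rewrite /c2 /=.
  move: ce; rewrite (_ : 2 - 1 = 1) // expn1 => ce.
  apply: m2_case => //; lia.
case: hm3 => m3 hm.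
have P0 : 0 < q ^ (m - 1) by rewrite expn_gt0; lia.
have c2P : c < 2 * q ^ (m - 1).
  have ce' := ce.
  case: (hm) => [[_ [ea eb]]|[_ [ba am]]].
    rewrite ea eb expn0 in ce'.
    have : c != 2 * q ^ (m - 1).
      by apply/negP => /eqP e; move: oc; rewrite e oddM.
    lia.
  have := two_pow q1 am; have : q ^ b < q ^ a by rewrite ltn_exp2l.
  lia.
have K : forall t t' R2, t' < t -> R2 < q ^ t' -> c = q ^ (m - 1) + q ^ t + q ^ t' + R2 ->
    m <= 4 \/ t < a \/ (t = a /\ t' < b).
  move=> t t' R2 t't hR hc.
  case: hm => [[h _]|[m5 [ba am]]]; first by left; lia.
  right; apply: (constr q1 ba t't hR); lia.
have [->|[t [t' [R2 [/andP [t't tm] hR hc H]]]]] := peel oq q3 m3 mc oc hP c2P.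
  by left.
have Kt := K t t' R2 t't hR hc.
case: H => [[R0 [l1 l2]]|[t'' [h1 h2 h3 h4 h5]]].
  have [et et'] := arith3 m3 hab t't tm l1 l2 Kt.
  right; rewrite /c2 ifN; last by apply/eqP; lia.
  by rewrite hc R0 addn0 et et'.
exfalso; exact: (arith4 m3 hab t't tm h1 h2 h3 h4 h5 Kt).
Qed.

Lemma t2_facts m : 3 <= m ->
  let t := m - 2 - (m - 3) %/ 3 in let t' := (m - 1) %/ 3 in
  [/\ t' < t, t < m - 1, L1 m t t' & L2 m t t'].
Proof.
move=> m3 t t'; rewrite /t /t' /L1 /L2.
have [n H] := mod3_cases m3.
case: H m3 => [[-> hn]|[[-> hn]|->]] m3.
- have -> : (3 * n - 3) %/ 3 = n - 1 by lia.
  have -> : (3 * n - 1) %/ 3 = n - 1 by lia.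
  split; lia.
- have -> : (3 * n + 1 - 3) %/ 3 = n - 1 by lia.
  have -> : (3 * n + 1 - 1) %/ 3 = n by lia.
  split; lia.
- have -> : (3 * n + 2 - 3) %/ 3 = n - 1 by lia.
  have -> : (3 * n + 2 - 1) %/ 3 = n by lia.
  split; lia.
Qed.

Lemma t2_lt m a b : 5 <= m -> ABspec m a b ->
  m - 2 - (m - 3) %/ 3 < a \/ (m - 2 - (m - 3) %/ 3 = a /\ (m - 1) %/ 3 < b).
Proof.
move=> m5 h; have m3 : 3 <= m by lia.
have [n H] := AB_vals m3 h.
case: H m5 => [[-> [hn [-> ->]]]|[[-> [hn [-> ->]]]|[-> [-> ->]]]] m5.
- have -> : (3 * n - 3) %/ 3 = n - 1 by lia.
  have -> : (3 * n - 1) %/ 3 = n - 1 by lia.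
  lia.
- have -> : (3 * n + 1 - 3) %/ 3 = n - 1 by lia.
  lia.
- have -> : (3 * n + 2 - 3) %/ 3 = n - 1 by lia.
  have -> : (3 * n + 2 - 1) %/ 3 = n by lia.
  lia.
Qed.

Lemma charac_bwd q m a b c : odd q -> 2 < q -> 2 <= m -> ABspec m a b -> (m = 2 -> 4 < q) ->
  (c = q ^ (m - 1) \/ c = c2 q m) ->
  [/\ 0 < c, c < q ^ m - 1, maxc q m c, odd c & c < q ^ (m - 1) + q ^ a + q ^ b].
Proof.
move=> oq q3 m2 hab q5 hc; have q1 : 1 < q by lia.
have P0 : 0 < q ^ (m - 1) by rewrite expn_gt0; lia.
have hm : q ^ m = q * q ^ (m - 1) by rewrite -expnS; congr (_ ^ _); lia.
have h3 : 3 * q ^ (m - 1) <= q * q ^ (m - 1) by rewrite leq_mul2r; lia.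
have a0 : 0 < q ^ a by rewrite expn_gt0; lia.
case: hc => ->.
  have PN : q ^ (m - 1) < q ^ m - 1 by lia.
  split => //; [ | exact: odd_pow | lia].
  apply: maxc_of_le => // k k0 km.
  have := @shapeX q m 1 k q1 m2 (ltn0Sn 0) q1 k0 km; rewrite mul1n; lia.
rewrite /c2; case: eqP => [em|nem].
  subst m; have [ea eb] : a = 1 /\ b = 1.
    by have := AB_facts m2 hab; lia.
  subst a b; rewrite (_ : 2 - 1 = 1) // expn1 in hm h3 P0 *.
  have qq : 2 * q + 1 < q ^ 2 - 1.
    have : 3 * q <= q * q by rewrite leq_mul2r; lia.
    rewrite hm; lia.
  split; [lia | exact: qq | | by rewrite oddD oddM | lia].
  apply: maxc_of_le => // k k0 km.
  have := @shape21 q 2 k q3 (ltnSn 1) k0 km.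
  rewrite (_ : 2 - 1 = 1) // expn1; lia.
have m3 : 3 <= m by lia.
have [t't tm l1 l2] := t2_facts m3.
move: t't tm l1 l2.
set t := m - 2 - (m - 3) %/ 3; set t' := (m - 1) %/ 3 => t't tm l1 l2.
have b1 := two_pow q1 t't.
have b2 := two_pow q1 tm.
have cP : q ^ (m - 1) + q ^ t + q ^ t' < 2 * q ^ (m - 1) by lia.
split; [lia | lia | exact: maxc3 | by rewrite !oddD !(odd_pow _ oq) | ].
have [[_ [ea eb]]|[m5 [ba am]]] : ((3 <= m /\ m <= 4) /\ a = m - 1 /\ b = 0) \/ (5 <= m /\ b < a /\ a < m - 1).
  by have := AB_facts m2 hab; lia.
  rewrite ea eb expn0; lia.
rewrite -!addnA ltn_add2l; apply: lex2_lt => //.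
exact: t2_lt.
Qed.

Lemma AB_strict m a b : 5 <= m -> ABspec m a b -> L1s m a b /\ L2s m a b.
Proof.
move=> m5 h; have m3 : 3 <= m by lia.
have [n H] := AB_vals m3 h.
rewrite /L1s /L2s; case: H m5 => [[-> [hn [-> ->]]]|[[-> [hn [-> ->]]]|[-> [-> ->]]]] m5; lia.
Qed.

Lemma e_facts q m a b : odd q -> 2 < q -> 2 <= m -> ABspec m a b -> (m = 2 -> 4 < q) ->
  let e := q ^ (m - 1) + q ^ a + q ^ b in
  [/\ 0 < e, e < q ^ m - 1, odd e &
      forall k, 0 < k -> k < m -> (e * q ^ k) %% (q ^ m - 1) < e].
Proof.
move=> oq q3 m2 hab q5 e; have q1 : 1 < q by lia.
have P0 : 0 < q ^ (m - 1) by rewrite expn_gt0; lia.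
have hm : q ^ m = q * q ^ (m - 1) by rewrite -expnS; congr (_ ^ _); lia.
have h3 : 3 * q ^ (m - 1) <= q * q ^ (m - 1) by rewrite leq_mul2r; lia.
have qP : q ^ 1 <= q ^ (m - 1) by rewrite leq_exp2l //; lia.
rewrite expn1 in qP.
have [[em [ea eb]]|[[hm34 [ea eb]]|[m5 [ba am]]]] := AB_facts m2 hab.
- subst m a b; have q4 := q5 erefl.
  have ee : e = 3 * q by rewrite /e (_ : 2 - 1 = 1) // expn1; lia.
  have hq2 : q ^ 2 = q * q by rewrite expnS expn1.
  have h5 : 5 * q <= q * q by rewrite leq_mul2r; lia.
  split; [lia | lia | by rewrite ee oddM oq | ].
  move=> k k0 km; rewrite ee.
  have := @shapeX q 2 3 k q1 (ltnSn 1) isT ltac:(lia) k0 km.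
  rewrite (_ : 2 - 1 = 1) // expn1; lia.
- subst a b.
  have ee : e = 2 * q ^ (m - 1) + 1 by rewrite /e expn0; lia.
  split; [lia | lia | by rewrite ee oddD oddM | ].
  move=> k k0 km; rewrite ee; exact: shape21.
- have b1 := two_pow q1 am.
  have : q ^ b < q ^ a by rewrite ltn_exp2l.
  move=> b2.
  split; [lia | lia | by rewrite /e !oddD !(odd_pow _ oq) | ].
  have [s1 s2] := AB_strict m5 hab.
  move=> k k0 km; exact: strict3.
Qed.

Lemma count2 N x1 x2 : x1 < N -> x2 < N -> x1 != x2 ->
  count (fun i => (i == x1) || (i == x2)) (iota 0 N) = 2.
Proof.
move=> h1 h2 h12.
have := count_predUI (pred1 x1) (pred1 x2) (iota 0 N).
have -> : count (predI (pred1 x1) (pred1 x2)) (iota 0 N) = 0.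
  apply/eqP; rewrite -leqn0 leqNgt -has_count; apply/hasP => -[i _] /= /andP [/eqP -> /eqP].
  by move/eqP: h12.
rewrite !count_uniq_mem ?iota_uniq // !mem_iota /= h1 h2 addn0 => H.
exact: H.
Qed.

Theorem lemma20 (q m : nat) :
  prime_power q -> odd q -> 3 <= q -> 2 <= m -> 25 <= q ^ m ->
  let N := q ^ m - 1 in
  let d3 := if ~~ (3 %| m.+1)
            then (q - 1) * q ^ (m - 1) - q ^ ((2 * m + 1) %/ 3)
                 - q ^ (m %/ 3 - 1) - 1
            else (q - 1) * q ^ (m - 1) - q ^ ((2 * m - 1) %/ 3)
                 - q ^ ((m + 1) %/ 3) - 1 in
  third_largest_odd_coset_leader q N d3 /\ size (cyc_coset q N d3) = m.
Proof.
move=> _ oq q3 m2 q25 N d3.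
have q1 : 1 < q by lia.
have m0 : 0 < m by lia.
set a := if ~~ (3 %| m.+1) then (2 * m + 1) %/ 3 else (2 * m - 1) %/ 3.
set b := if ~~ (3 %| m.+1) then m %/ 3 - 1 else (m + 1) %/ 3.
have hab : ABspec m a b.
  rewrite /a /b /ABspec; case: ifP => h; [left | right]; split => //.
  by move/negbT: h; rewrite negbK.
have hd : d3 = (q - 1) * q ^ (m - 1) - q ^ a - q ^ b - 1.
  by rewrite /d3 /a /b; case: ifP.
have q5 : m = 2 -> 4 < q.
  move=> em; subst m; rewrite ltnNge; apply/negP => h.
  have : q ^ 2 <= 4 ^ 2 by rewrite leq_exp2r.
  lia.
have [e0 eN oe est] := e_facts oq q3 m2 hab q5.
move: e0 eN oe est; set e := q ^ (m - 1) + q ^ a + q ^ b => e0 eN oe est.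
have hm : q ^ m = q * q ^ (m - 1) by rewrite -expnS; congr (_ ^ _); lia.
have hd3 : d3 = N - e by rewrite hd /N /e mulnBl mul1n -hm; lia.
have oN : ~~ odd N.
  by rewrite /N oddB ?expn_gt0 ?(ltnW q1) // oddX oq orbT.
have oddc c : c <= N -> odd (N - c) = odd c.
  by move=> cN; rewrite oddB // (negbTE oN).
have mce : maxc q m e by apply: maxc_of_le => // k k0 km; apply: ltnW; apply: est.
have ld : coset_leader q N d3 by rewrite hd3; apply/leader_compl.
have [c10 c1N mc1 oc1 c1e] := @charac_bwd q m a b (q ^ (m - 1)) oq q3 m2 hab q5 (or_introl erefl).
have [c20 c2N mc2 oc2 c2e] := @charac_bwd q m a b (c2 q m) oq q3 m2 hab q5 (or_intror erefl).
have c12 : q ^ (m - 1) != c2 q m.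
  rewrite /c2; case: ifP => [/eqP em|_].
    by rewrite em (_ : 2 - 1 = 1) // expn1; lia.
  have : 0 < q ^ (m - 2 - (m - 3) %/ 3) by rewrite expn_gt0; lia.
  lia.
split; last first.
  apply: size_coset => //; first lia.
  move=> k k0 km; rewrite hd3 compl_rot //; try lia.
  have := est k k0 km; lia.
split.
  by rewrite /odd_coset_leader ld hd3 oddc // ?oe; lia.
rewrite (@eq_in_count _ _ (fun i => (i == N - q ^ (m - 1)) || (i == N - c2 q m))); last first.
  move=> i; rewrite mem_iota /= => iN.
  rewrite /odd_coset_leader.
  have [->|i0] := posnP i.
    rewrite ltn0 andbF; symmetry; apply/negP; case/orP => /eqP; lia.
  have [c [ec c0 cN]] : exists c, [/\ i = N - c, 0 < c & c < N] by exists (N - i); split; lia.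
  subst i.
  apply/idP/idP.
    case/andP => /andP [oi li] di.
    have mc := (leader_compl q1 m0 c0 cN).1 li.
    rewrite oddc in oi; last lia.
    have ce : c < e by lia.
    have [->|->] := charac_fwd oq q3 m2 hab c0 cN mc oi ce.
      by rewrite eqxx.
    by rewrite eqxx orbT.
  case/orP => /eqP h.
    have -> : c = q ^ (m - 1) by lia.
    rewrite oddc ?oc1; last lia.
    rewrite (leader_compl q1 m0 c10 c1N).2 //=; lia.
  have -> : c = c2 q m by lia.
  rewrite oddc ?oc2; last lia.
  rewrite (leader_compl q1 m0 c20 c2N).2 //=; lia.
apply: count2; try lia.
Qed.
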